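(* Let $\alpha\geq1$, $N>0$, $B_N(x_1,x_2,x_3):=(\sin Nx_3,\cos Nx_3,0)$ and $\phi(x):=(1+|x|^2)^{-\alpha}$ on $\mathbb{R}^3$, and let $\omega_0^1:=\mathop{\mathrm{curl}}\mathop{\mathrm{curl}}(\phi B_N)$. If $N$ is sufficiently large compared with $\alpha$ ($N\gg\alpha$), then $\omega_0^1$ has no zeros on $\mathbb{R}^3$. *)

(* Defs.v *)
From Stdlib Require Import Reals.
From Coquelicot Require Import Coquelicot.
Open Scope R_scope.

Record vec3 := V3 { v1 : R; v2 : R; v3 : R }.
Definition vfield := R -> R -> R -> vec3.

Definition d1 (f : R -> R -> R -> R) (x y z : R) : R := Derive (fun t => f t y z) x.
Definition d2 (f : R -> R -> R -> R) (x y z : R) : R := Derive (fun t => f x t z) y.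
Definition d3 (f : R -> R -> R -> R) (x y z : R) : R := Derive (fun t => f x y t) z.

Definition curl (F : vfield) : vfield := fun x y z =>
  let F1 := fun a b c => v1 (F a b c) in
  let F2 := fun a b c => v2 (F a b c) in
  let F3 := fun a b c => v3 (F a b c) in
  V3 (d2 F3 x y z - d3 F2 x y z)
     (d3 F1 x y z - d1 F3 x y z)
     (d1 F2 x y z - d2 F1 x y z).

Definition B_N (N : R) : vfield := fun x y z => V3 (sin (N * z)) (cos (N * z)) 0.

Definition phi (alpha : R) (x y z : R) : R :=
  Rpower (1 + (x ^ 2 + y ^ 2 + z ^ 2)) (- alpha).

Definition phiB (alpha N : R) : vfield := fun x y z =>
  let b := B_N N x y z in
  V3 (phi alpha x y z * v1 b) (phi alpha x y z * v2 b) (phi alpha x y z * v3 b).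

Definition omega01 (alpha N : R) : vfield := curl (curl (phiB alpha N)).

(* Main.v *)
Require Import Defs.
From Stdlib Require Import Reals.
From Coquelicot Require Import Coquelicot.
From Stdlib Require Import Lra Psatz FunctionalExtensionality.
Open Scope R_scope.

Lemma Derive_is (f : R -> R) x l : is_derive f x l -> Derive f x = l.
Proof. apply is_derive_unique. Qed.

Lemma U_pos x y z : 0 < 1 + (x * (x * 1) + y * (y * 1) + z * (z * 1)).
Proof. nra. Qed.

Lemma U_neq x y z : 1 + (x * (x * 1) + y * (y * 1) + z * (z * 1)) <> 0.
Proof. nra. Qed.

Ltac dd := erewrite Derive_is; [| auto_derive; repeat split; try apply U_pos; try apply U_neq; reflexivity].

Definition UU x y z := 1 + (x ^ 2 + y ^ 2 + z ^ 2).
Definition EE a x y z := exp (- a * ln (UU x y z)).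
Definition G1 a N x y z := EE a x y z * (N * sin (N * z) + 2 * a * z * cos (N * z) / UU x y z).
Definition G2 a N x y z := EE a x y z * (N * cos (N * z) - 2 * a * z * sin (N * z) / UU x y z).
Definition G3 a N x y z := EE a x y z * (2 * a * y * sin (N * z) - 2 * a * x * cos (N * z)) / UU x y z.

Lemma curl1 a N : curl (phiB a N) = fun x y z => V3 (G1 a N x y z) (G2 a N x y z) (G3 a N x y z).
Proof.
  apply functional_extensionality; intro x.
  apply functional_extensionality; intro y.
  apply functional_extensionality; intro z.
  unfold curl; cbv zeta; unfold Defs.d1, Defs.d2, Defs.d3, phiB, B_N, phi, Rpower, G1, G2, G3, EE, UU.
  cbn [v1 v2 v3]. unfold Defs.d1, Defs.d2, Defs.d3.
  assert (Hu := U_pos x y z).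
  f_equal; unfold Defs.d1, Defs.d2, Defs.d3; repeat dd; cbn [pow]; field; lra.
Qed.

Lemma key a N x y z :
  v1 (omega01 a N x y z) * sin (N * z) + v2 (omega01 a N x y z) * cos (N * z)
  = EE a x y z * ((sin (N*z) ^ 2 + cos (N*z) ^ 2) *
       (N ^ 2 - (4 * a * (a + 1) * (x^2+y^2+z^2) / (UU x y z)^2 - 6 * a / UU x y z))
     + 4 * a * (a + 1) * (sin (N*z) * x + cos (N*z) * y) ^ 2 / (UU x y z) ^ 2
     - 2 * a * (sin (N*z) ^ 2 + cos (N*z) ^ 2) / UU x y z).
Proof.
  unfold omega01. rewrite curl1.
  unfold curl; cbv zeta; unfold Defs.d1, Defs.d2, Defs.d3, G1, G2, G3, EE, UU.
  cbn [v1 v2 v3]. unfold Defs.d1, Defs.d2, Defs.d3.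
  assert (Hu := U_pos x y z).
  repeat dd. cbn [pow]. set (E := exp _). set (s := sin (N*z)). set (c := cos (N*z)). clearbody E s c. field. nra.
Qed.

Theorem proposition4p1 :
  exists C : R, 0 < C /\
    forall alpha N : R, 1 <= alpha -> 0 < N -> C * alpha <= N ->
      forall x y z : R, omega01 alpha N x y z <> V3 0 0 0.
Proof.
  exists 3. split; [lra|].
  intros a N Ha HN HC x y z H.
  pose proof (key a N x y z) as K. rewrite H in K. cbn [v1 v2] in K.
  assert (Hsc : sin (N*z) ^ 2 + cos (N*z) ^ 2 = 1).
  { rewrite <- (sin2_cos2 (N*z)); unfold Rsqr; ring. }
  rewrite Hsc in K.
  assert (HE : 0 < EE a x y z) by (unfold EE; apply exp_pos).
  set (U := UU x y z) in K.
  set (w := sin (N*z) * x + cos (N*z) * y) in K.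
  assert (HU : 1 <= U) by (unfold U, UU; nra).
  assert (HUr : x^2+y^2+z^2 = U - 1) by (unfold U, UU; ring).
  rewrite HUr in K.
  set (Q := (U - 1) / U^2).
  set (P := / U).
  set (M := w^2 / U^2).
  assert (HQ0 : 0 <= Q) by (unfold Q; apply Rmult_le_pos; [lra | apply Rlt_le, Rinv_0_lt_compat; nra]).
  assert (HQ1 : Q <= 1).
  { unfold Q. apply (Rmult_le_reg_r (U^2)); [nra|].
    unfold Rdiv; rewrite Rmult_assoc, Rinv_l; nra. }
  assert (HP : 0 < P) by (unfold P; apply Rinv_0_lt_compat; lra).
  assert (HM : 0 <= M) by (unfold M; apply Rmult_le_pos; [nra | apply Rlt_le, Rinv_0_lt_compat; nra]).
  assert (HT : 1 * (N ^ 2 - (4 * a * (a + 1) * (U - 1) / U ^ 2 - 6 * a / U)) +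
      4 * a * (a + 1) * w ^ 2 / U ^ 2 - 2 * a * 1 / U
      = N^2 - 4*a*(a+1)*Q + 4*a*P + 4*a*(a+1)*M).
  { unfold Q, P, M. field. lra. }
  rewrite HT in K.
  assert (H1 : 4*a*(a+1)*Q <= 4*a*(a+1)) by (apply Rmult_le_compat_l with (r := 4*a*(a+1)) in HQ1; [lra | nra]).
  assert (H2 : 0 <= 4*a*(a+1)*M) by (apply Rmult_le_pos; nra).
  assert (H3 : 9*a^2 <= N^2) by nra.
  assert (Hpos : 0 < N^2 - 4*a*(a+1)*Q + 4*a*P + 4*a*(a+1)*M) by nra.
  assert (0 < EE a x y z * (N^2 - 4*a*(a+1)*Q + 4*a*P + 4*a*(a+1)*M)) by (apply Rmult_lt_0_compat; lra).
  lra.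
Qed.
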